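(* Let $K\le P$ be positive integers, $\theta=(K,P)$, and $n\ge 3$. Then $\mathbb{E}[\chi_{123}(\theta)]=\beta(\theta)$, and consequently $\mathbb{E}[T_n(\theta)]=\binom{n}{3}\beta(\theta)$.
   Context: Random key graph: fix positive integers $K\le P$ and write $\theta=(K,P)$. For $n\ge 3$, let $K_1(\theta),\dots,K_n(\theta)$ be i.i.d. random subsets of $\{1,\dots,P\}$, each uniformly distributed over the $\binom{P}{K}$ subsets of size $K$. The random key graph $\mathbb{K}(n;\theta)$ on vertex set $\{1,\dots,n\}$ has an edge between distinct $i,j$ iff $K_i(\theta)\cap K_j(\theta)\neq\emptyset$. Define $q(\theta)=\binom{P-K}{K}/\binom{P}{K}$ if $2K\le P$ and $q(\theta)=0$ if $P<2K$ (so $q(\theta)$ is the probability that two given nodes are not adjacent); $p(\theta)=1-q(\theta)$; $r(\theta)=\binom{P-2K}{K}/\binom{P}{K}$ if $3K\le P$ and $r(\theta)=0$ if $P<3K$; $\beta(\theta)=(1-q(\theta))^3+q(\theta)^3-q(\theta)r(\theta)$. For distinct $i,j,k$, $\chi_{ijk}(\theta)$ is the indicator that nodes $i,j,k$ form a triangle in $\mathbb{K}(n;\theta)$, and $T_n(\theta)=\sum_{1\le i<j<k\le n}\chi_{ijk}(\theta)$ is the number of triangles. *)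

(* Defs.v *)
From HB Require Import structures.
From mathcomp Require Import all_boot all_order all_algebra.
Set Implicit Arguments. Unset Strict Implicit. Unset Printing Implicit Defensive.
Import Order.TTheory GRing.Theory Num.Theory.
Local Open Scope ring_scope.

(* A key assignment: node i : 'I_n gets a key ring ks i, a subset of the key
   pool 'I_P (which stands for {1,...,P}). *)
Definition keyassign (n P : nat) := {ffun 'I_n -> {set 'I_P}}.

(* Sample space: all assignments where every key ring has exactly K keys.
   Uniform measure on it = i.i.d. uniform K-subsets. *)
Definition keyspace (n P K : nat) : {set keyassign n P} :=
  [set ks : keyassign n P | [forall i, #|ks i| == K]].

Definition expect (n P K : nat) (X : keyassign n P -> rat) : rat :=
  (\sum_(ks in keyspace n P K) X ks) / (#|keyspace n P K|)%:R.

Definition adj (n P : nat) (ks : keyassign n P) (i j : 'I_n) : bool :=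
  (i != j) && (ks i :&: ks j != set0).

Definition chi (n P : nat) (ks : keyassign n P) (i j k : 'I_n) : rat :=
  (adj ks i j && adj ks j k && adj ks i k)%:R.

Definition Tn (n P : nat) (ks : keyassign n P) : rat :=
  \sum_(i < n) \sum_(j < n | (i < j)%N) \sum_(k < n | (j < k)%N) chi ks i j k.

Definition qth (K P : nat) : rat :=
  if (2 * K <= P)%N then ('C(P - K, K))%:R / ('C(P, K))%:R else 0.
Definition pth (K P : nat) : rat := 1 - qth K P.
Definition rth (K P : nat) : rat :=
  if (3 * K <= P)%N then ('C(P - 2 * K, K))%:R / ('C(P, K))%:R else 0.
Definition betath (K P : nat) : rat :=
  (1 - qth K P) ^+ 3 + qth K P ^+ 3 - qth K P * rth K P.
Arguments chi {n P} ks i j k.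
Arguments Tn {n P} ks.
Arguments expect n P K X : clear implicits.

(* Main.v *)
Require Import Defs.
From HB Require Import structures.
From mathcomp Require Import all_boot all_order all_algebra.
From mathcomp Require Import zify ring lra.
Set Implicit Arguments. Unset Strict Implicit. Unset Printing Implicit Defensive.
Import Order.TTheory GRing.Theory Num.Theory.

Lemma L1n n j : \sum_(0 <= k < n | j < k) 1 = n - j.+1.
Proof.
elim: n => [|n IH]; first by rewrite big_geq.
rewrite big_mkcond big_nat_recr //= -big_mkcond IH.
case: ltnP => h; lia.
Qed.

Lemma L2n n i : \sum_(0 <= j < n | i < j) (n - j.+1) = 'C(n - i.+1, 2).
Proof.
elim: n => [|n IH]; first by rewrite big_geq.
rewrite big_mkcond big_nat_recr //= subnn.
have -> : \sum_(0 <= j < n) (if i < j then n.+1 - j.+1 else 0)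
        = \sum_(0 <= j < n) ((if i < j then n - j.+1 else 0) + (if i < j then 1 else 0)).
  apply: eq_big_nat => j /andP[_ hj]; case: ifP => //= _; lia.
rewrite big_split /= -!big_mkcond IH L1n.
case: (ltnP i n) => h.
  have -> : (n.+1 - i.+1 = (n - i.+1).+1)%N by lia.
  by rewrite binS bin1 addn0.
have -> : (n - i.+1 = 0)%N by lia.
have -> : (n.+1 - i.+1 = 0)%N by lia.
by rewrite !addn0.
Qed.

Lemma L2'n n : \sum_(0 <= i < n) (n - i.+1) = 'C(n, 2).
Proof.
have := L2n n.+1 0.
rewrite big_mkcond big_nat_recl //= subSS subn0.
move=> <-; apply: eq_big_nat => i _; lia.
Qed.

Lemma L3n n : \sum_(0 <= i < n) 'C(n - i.+1, 2) = 'C(n, 3).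
Proof.
elim: n => [|n IH]; first by rewrite big_geq.
rewrite big_nat_recr //= subnn bin0n addn0.
have -> : \sum_(0 <= i < n) 'C(n.+1 - i.+1, 2)
        = \sum_(0 <= i < n) ('C(n - i.+1, 2) + (n - i.+1)).
  apply: eq_big_nat => i /andP[_ hi].
  have -> : (n.+1 - i.+1 = (n - i.+1).+1)%N by lia.
  by rewrite binS bin1.
by rewrite big_split /= IH L2'n binS.
Qed.

Lemma count3 n :
  \sum_(i < n) \sum_(j < n | i < j) \sum_(k < n | j < k) 1 = 'C(n, 3).
Proof.
have h1 : forall j, \sum_(k < n | j < k) 1 = n - j.+1.
  by move=> j; rewrite -(L1n n j) big_mkord.
under eq_bigr => i _ do under eq_bigr => j _ do rewrite h1.
have h2 : forall i, \sum_(j < n | i < j) (n - j.+1) = 'C(n - i.+1, 2).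
  by move=> i; rewrite -(L2n n i) big_mkord.
under eq_bigr => i _ do rewrite h2.
by rewrite -L3n big_mkord.
Qed.

Local Open Scope ring_scope.

Lemma card3 n (i0 i1 i2 : 'I_n) : i0 != i1 -> i0 != i2 -> i1 != i2 ->
  #|[pred i | (i != i0) && (i != i1) && (i != i2)]| = (n - 3)%N.
Proof.
move=> h01 h02 h12.
have := cardC [pred i | (i != i0) && (i != i1) && (i != i2)].
rewrite card_ord.
have -> : #|[predC [pred i | (i != i0) && (i != i1) && (i != i2)]]| = 3%N.
  have -> : #|[predC [pred i | (i != i0) && (i != i1) && (i != i2)]]| = #|[set i0; i1; i2]|.
    by apply: eq_card => i; rewrite !inE -!negb_or negbK. 
  by rewrite [in LHS]setUC cardsU1 cardsU1 cards1 !inE !(eq_sym i2) (eq_sym i1) (negbTE h01) (negbTE h02) ?(eq_sym i2 i1) ?(negbTE h12).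
move=> e; rewrite -[in RHS]e; by rewrite addnK.
Qed.

Lemma prod3 n (i0 i1 i2 : 'I_n) (a b c : 'I_n -> rat) (d : rat) :
  i0 != i1 -> i0 != i2 -> i1 != i2 ->
  \prod_i (if i == i0 then a i else if i == i1 then b i else if i == i2 then c i else d)
  = a i0 * b i1 * c i2 * d ^+ (n - 3).
Proof.
move=> h01 h02 h12.
rewrite (bigD1 i0) //= eqxx (bigD1 i1) /=; last by rewrite eq_sym.
rewrite eqxx eq_sym (negbTE h01) (bigD1 i2) /=; last by rewrite !(eq_sym i2) h02 h12.
rewrite eqxx eq_sym (negbTE h02) eq_sym (negbTE h12) !mulrA.
rewrite (eq_bigr (fun=> d)); last first.
  by move=> i /andP[/andP[/negbTE-> /negbTE->] /negbTE->].
rewrite prodr_const -(card3 h01 h02 h12).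
congr (_ * _ ^+ _); exact: eq_card.
Qed.


Lemma prod_bool (I : finType) (b : I -> bool) :
  \prod_i ((b i : nat)%:R : rat) = ([forall i, b i] : nat)%:R.
Proof.
case: (boolP [forall i, b i]) => [/forallP H|/forallPn[i Hi]].
  by rewrite big1 // => i _; rewrite H.
by rewrite (bigD1 i) //= (negbTE Hi) mul0r.
Qed.

Lemma sum_ind (T : finType) (x : T) (g : T -> rat) :
  \sum_A ((x == A : nat)%:R * g A) = g x.
Proof.
rewrite (bigD1 x) //= eqxx mul1r big1 ?addr0 // => A.
by rewrite eq_sym => /negbTE ->; rewrite mul0r.
Qed.

Lemma sum_ind' (T : finType) (x : T) (g : T -> rat) :
  \sum_A (g A * (A == x : nat)%:R) = g x.
Proof.
rewrite -(sum_ind x g); apply: eq_bigr => A _; by rewrite eq_sym mulrC.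
Qed.

Lemma sumN P K : \sum_(X : {set 'I_P}) ((#|X| == K : bool) : nat)%:R = ('C(P, K))%:R :> rat.
Proof. by rewrite -natr_sum -big_mkcond /= sum1dep_card card_draws card_ord. Qed.

Lemma sum_key3 n P K (i0 i1 i2 : 'I_n) :
  i0 != i1 -> i0 != i2 -> i1 != i2 ->
  forall f : {set 'I_P} -> {set 'I_P} -> {set 'I_P} -> rat,
  \sum_(ks in keyspace n P K) f (ks i0) (ks i1) (ks i2) =
  ('C(P, K))%:R ^+ (n - 3) *
    \sum_(A : {set 'I_P} | #|A| == K) \sum_(B : {set 'I_P} | #|B| == K) \sum_(C : {set 'I_P} | #|C| == K) f A B C.
Proof.
move=> h01 h02 h12 f.
pose h (A B C : {set 'I_P}) (i : 'I_n) (X : {set 'I_P}) : rat := ((#|X| == K) : nat)%:R *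
  (if i == i0 then (X == A : nat)%:R else if i == i1 then (X == B : nat)%:R
   else if i == i2 then (X == C : nat)%:R else 1).
have hprod : forall (ks : keyassign n P) A B C, \prod_i h A B C i (ks i) =
   ((ks \in keyspace n P K) : nat)%:R * ((ks i0 == A : nat)%:R * ((ks i1 == B : nat)%:R * (ks i2 == C : nat)%:R)).
  move=> ks A B C; rewrite big_split /= prod_bool inE.
  rewrite (prod3 (fun i => (ks i == A : nat)%:R) (fun i => (ks i == B : nat)%:R) (fun i => (ks i == C : nat)%:R)) //.
  by rewrite expr1n mulr1 !mulrA.
have E1 : forall ks : keyassign n P,
  ((ks \in keyspace n P K) : nat)%:R * f (ks i0) (ks i1) (ks i2) =
  \sum_A \sum_B \sum_C (f A B C * \prod_i h A B C i (ks i)).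
  move=> ks; set k := ((ks \in keyspace n P K) : nat)%:R.
  rewrite -[LHS](sum_ind (ks i0) (fun A => k * f A (ks i1) (ks i2))).
  apply: eq_bigr => A _.
  rewrite -(sum_ind (ks i1) (fun B => k * f A B (ks i2))) mulr_sumr.
  apply: eq_bigr => B _.
  rewrite -(sum_ind (ks i2) (fun C => k * f A B C)) !mulr_sumr.
  apply: eq_bigr => C _.
  rewrite hprod /k; ring.
transitivity (\sum_(ks : keyassign n P) ((ks \in keyspace n P K) : nat)%:R * f (ks i0) (ks i1) (ks i2)).
  rewrite big_mkcond; apply: eq_bigr => ks _.
  by case: (ks \in _); rewrite ?mul1r ?mul0r.
rewrite (eq_bigr _ (fun ks _ => E1 ks)).
have hsum : forall A B C i, \sum_X h A B C i X =
  if i == i0 then ((#|A| == K) : nat)%:R else if i == i1 then ((#|B| == K) : nat)%:R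
  else if i == i2 then ((#|C| == K) : nat)%:R else ('C(P, K))%:R.
  move=> A B C i; rewrite /h.
  case: (i == i0); first exact: sum_ind'.
  case: (i == i1); first exact: sum_ind'.
  case: (i == i2); first exact: sum_ind'.
  under eq_bigr do rewrite mulr1.
  exact: sumN.
transitivity (\sum_(A : {set 'I_P}) \sum_(B : {set 'I_P}) \sum_(C : {set 'I_P}) f A B C *
   (((#|A|==K):nat)%:R * (((#|B|==K):nat)%:R * (((#|C|==K):nat)%:R * ('C(P, K))%:R ^+ (n - 3))))).
  rewrite exchange_big; apply: eq_bigr => A _.
  rewrite exchange_big; apply: eq_bigr => B _.
  rewrite exchange_big; apply: eq_bigr => C _.
  rewrite -mulr_sumr; congr (_ * _).
  rewrite -(bigA_distr_bigA (h A B C)).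
  under eq_bigr do rewrite hsum.
  rewrite (prod3 (fun=> ((#|A| == K) : nat)%:R) (fun=> ((#|B| == K) : nat)%:R) (fun=> ((#|C| == K) : nat)%:R)) //.
  by rewrite !mulrA.
rewrite mulr_sumr [RHS]big_mkcond; apply: eq_bigr => A _.
case: (#|A| == K); last by rewrite big1 // => B _; rewrite big1 // => C _; rewrite mul0r mulr0.
rewrite mulr_sumr [RHS]big_mkcond; apply: eq_bigr => B _.
case: (#|B| == K); last by rewrite big1 // => C _; rewrite mul0r mulr0 mulr0.
rewrite mulr_sumr [RHS]big_mkcond; apply: eq_bigr => C _.
case: (#|C| == K); last by rewrite !(mul0r, mulr0).
by rewrite mulrC /= !mul1r.
Qed.

Lemma cnt_disj (P K : nat) (Y : {set 'I_P}) :
  \sum_(X : {set 'I_P} | #|X| == K) ([disjoint Y & X] : nat)%:R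
   = ('C(P - #|Y|, K))%:R :> rat.
Proof.
rewrite -natr_sum -big_mkcondr /=.
rewrite sum1dep_card.
rewrite -[X in 'C(X - _, _)](card_ord P).
have -> : (#|'I_P| - #|Y| = #|~: Y|)%N by rewrite -(cardsC Y) addKn.
rewrite -cards_draws; congr _%:R; apply: eq_card => X.
by rewrite !inE andbC disjoint_sym disjoints_subset.
Qed.

Definition tri P (A B C : {set 'I_P}) : rat :=
  ((A :&: B != set0) && (B :&: C != set0) && (A :&: C != set0) : nat)%:R.

Lemma sumc (P K : nat) (c : rat) : \sum_(X : {set 'I_P} | #|X| == K) c = ('C(P, K))%:R * c.
Proof.
rewrite sumr_const -[LHS]mulr_natl; congr (_%:R * _).
by rewrite -[in RHS](card_ord P) -card_draws; apply: eq_card => X; rewrite inE.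
Qed.

Lemma core (P K : nat) :
  let N : rat := ('C(P, K))%:R in
  let D : rat := ('C(P - K, K))%:R in
  let E : rat := ('C(P - 2 * K, K))%:R in
  \sum_(A : {set 'I_P} | #|A| == K) \sum_(B : {set 'I_P} | #|B| == K)
    \sum_(C : {set 'I_P} | #|C| == K) tri A B C
  = N ^+ 3 - 3 * N ^+ 2 * D + 3 * N * D ^+ 2 - N * D * E.
Proof.
move=> N D E.
pose dj (X Y : {set 'I_P}) : rat := ([disjoint X & Y] : nat)%:R.
have L1 : forall Y : {set 'I_P}, #|Y| = K -> \sum_(X : {set 'I_P} | #|X| == K) dj Y X = D.
  by move=> Y hY; rewrite cnt_disj hY.
have L1' : forall Y : {set 'I_P}, #|Y| = K -> \sum_(X : {set 'I_P} | #|X| == K) dj X Y = D.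
  move=> Y hY; rewrite -(L1 Y hY); apply: eq_bigr => X _; by rewrite /dj disjoint_sym.
have L3 : forall A B : {set 'I_P}, #|A| = K -> #|B| = K -> [disjoint A & B] ->
   \sum_(X : {set 'I_P} | #|X| == K) dj A X * dj B X = E.
  move=> A B hA hB hAB.
  have -> : E = \sum_(X : {set 'I_P} | #|X| == K) dj (A :|: B) X.
    rewrite cnt_disj cardsU hA hB.
    move: hAB; rewrite -setI_eq0 => /eqP ->; rewrite cards0 subn0.
    by rewrite /E mul2n addnn.
  apply: eq_bigr => X _; rewrite /dj.
  have -> : [disjoint A :|: B & X] = [disjoint A & X] && [disjoint B & X].
    by rewrite -disjointU; apply: eq_disjoint => x; rewrite !inE.
  by case: [disjoint A & X]; case: [disjoint B & X]; rewrite /= ?mul1r ?mul0r.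
pose G (A B : {set 'I_P}) := \sum_(C : {set 'I_P} | #|C| == K) dj A C * dj B C.
have step1 : forall A B : {set 'I_P}, #|A| = K -> #|B| = K ->
  \sum_(C : {set 'I_P} | #|C| == K) tri A B C = (1 - dj A B) * (N - D - D + G A B).
  move=> A B hA hB.
  rewrite (eq_bigr (fun C => (1 - dj A B) * (1 - dj B C - dj A C + dj A C * dj B C))); last first.
    move=> C _; rewrite /tri /dj -!setI_eq0.
    case: (A :&: B == set0); case: (B :&: C == set0); case: (A :&: C == set0); rewrite /=; ring.
  rewrite -mulr_sumr; congr (_ * _).
  by rewrite big_split /= !sumrB sumc mulr1 (L1 B hB) (L1 A hA).
have step2 : forall A : {set 'I_P}, #|A| = K ->
  \sum_(B : {set 'I_P} | #|B| == K) (1 - dj A B) * (N - D - D + G A B)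
  = (N - D) * (N - D - D) + D * D - D * E.
  move=> A hA.
  rewrite (eq_bigr (fun B => (1 - dj A B) * (N - D - D) + G A B - dj A B * E)); last first.
    move=> B /eqP hB.
    have : dj A B * G A B = dj A B * E.
      rewrite /dj; case: (boolP [disjoint A & B]) => h /=; last by rewrite !mul0r.
      by rewrite /G L3.
    move=> h; rewrite mulrDr -h; ring.
  rewrite !big_split /= sumrN -!mulr_suml sumrB sumc mulr1 !(L1 A hA).
  congr (_ + _ - _).
  rewrite /G exchange_big /=.
  rewrite (eq_bigr (fun C => dj A C * D)); last first.
    by move=> C /eqP hC; rewrite -mulr_sumr L1'.
  by rewrite -mulr_suml L1.
rewrite (eq_bigr (fun A => (N - D) * (N - D - D) + D * D - D * E)); last first.
  move=> A /eqP hA; rewrite -(step2 A hA); apply: eq_bigr => B /eqP hB; exact: step1.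
rewrite sumc; ring.
Qed.

Unset Implicit Arguments.

Theorem proposition1 (K P n : nat) (hK : (0 < K)%N) (hKP : (K <= P)%N)
    (hn : (3 <= n)%N) :
  expect n P K (fun ks => chi ks (Ordinal (leq_trans (isT : (0 < 3)%N) hn))
                               (Ordinal (leq_trans (isT : (1 < 3)%N) hn))
                               (Ordinal (leq_trans (isT : (2 < 3)%N) hn)))
    = betath K P
  /\ expect n P K (fun ks => Tn ks) = ('C(n, 3))%:R * betath K P.
Proof.
set N : rat := ('C(P, K))%:R.
set S := \sum_(A : {set 'I_P} | #|A| == K) \sum_(B : {set 'I_P} | #|B| == K)
    \sum_(C : {set 'I_P} | #|C| == K) tri A B C.
set M := N ^+ (n - 3) * S.
have hchi : forall (i j k : 'I_n), (i < j)%N -> (j < k)%N ->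
   \sum_(ks in keyspace n P K) chi ks i j k = M.
  move=> i j k hij hjk.
  have h01 : i != j by apply/eqP => e; move: hij; rewrite e ltnn.
  have h12 : j != k by apply/eqP => e; move: hjk; rewrite e ltnn.
  have h02 : i != k by apply/eqP => e; move: (ltn_trans hij hjk); rewrite e ltnn.
  rewrite /M /S /N -(sum_key3 K h01 h02 h12 (@tri P)).
  apply: eq_bigr => ks _.
  by rewrite /chi /tri /adj h01 h02 h12.
have hcard : (#|keyspace n P K|)%:R = N ^+ (n - 3) * N ^+ 3 :> rat.
  have h01 : (Ordinal (leq_trans (isT : (0 < 3)%N) hn)) != (Ordinal (leq_trans (isT : (1 < 3)%N) hn)) by [].
  have h02 : (Ordinal (leq_trans (isT : (0 < 3)%N) hn)) != (Ordinal (leq_trans (isT : (2 < 3)%N) hn)) by [].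
  have h12 : (Ordinal (leq_trans (isT : (1 < 3)%N) hn)) != (Ordinal (leq_trans (isT : (2 < 3)%N) hn)) by [].
  rewrite -sum1_card natr_sum.
  rewrite (sum_key3 K h01 h02 h12 (fun _ _ _ => 1)).
  by rewrite !sumc mulr1 /N; congr (_ * _); rewrite expr2 exprS expr1n ?mulrA; ring.
have hN : N != 0 by rewrite /N pnatr_eq0 -lt0n bin_gt0.
have hval : M / (#|keyspace n P K|)%:R = betath K P.
  rewrite hcard /M /S core /=.
  rewrite /betath /qth /rth -/N.
  set D : rat := ('C(P - K, K))%:R.
  set E : rat := ('C(P - 2 * K, K))%:R.
  have hNn : N ^+ (n - 3) != 0 by rewrite expf_neq0.
  case: ifP => h2; last first.
    have hD : D = 0 by rewrite /D bin_small //; move/negbT: h2; rewrite -ltnNge; lia.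
    have hE : E = 0 by rewrite /E bin_small //; move/negbT: h2; rewrite -ltnNge; lia.
    rewrite hD hE; field; by rewrite hNn hN.
  case: ifP => h3; last first.
    have hE : E = 0 by rewrite /E bin_small //; move/negbT: h3; rewrite -ltnNge; lia.
    rewrite hE; field; by rewrite hNn hN.
  field; by rewrite hNn hN.
split.
  rewrite /expect hchi //.
rewrite /expect /Tn.
rewrite exchange_big /=.
rewrite (eq_bigr (fun i : 'I_n => \sum_(j < n | (i < j)%N) \sum_(k < n | (j < k)%N) M)); last first.
  move=> i _; rewrite exchange_big /=; apply: eq_bigr => j hij.
  rewrite exchange_big /=; apply: eq_bigr => k hjk.
  exact: hchi.
have cnt : \sum_(i < n) \sum_(j < n | (i < j)%N) \sum_(k < n | (j < k)%N) M
   = (\sum_(i < n) \sum_(j < n | (i < j)%N) \sum_(k < n | (j < k)%N) 1%N)%:R * M.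
  rewrite natr_sum mulr_suml; apply: eq_bigr => i _.
  rewrite natr_sum mulr_suml; apply: eq_bigr => j _.
  rewrite natr_sum mulr_suml; apply: eq_bigr => k _.
  by rewrite mul1r.
by rewrite cnt count3 -mulrA hval.
Qed.
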